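(* For $\delta\in[-1,1]$ let $C_\delta(u,v)=\dfrac{uv}{1+\delta(1-u)(1-v)}$, $(u,v)\in[0,1]^2$ (Ali–Mikhail–Haq family). If $\delta\in[0,1]$, then $C_\delta$ is $I(-1,1)$ and $I(1,-1)$. If $\delta\in[-1,0]$, then $C_\delta$ is $I(1,1)$ and $I(-1,-1)$.
   Context: For $\alpha\in\{-1,1\}^2$ and a random pair $\mathbf X$, write $\alpha\mathbf X=(\alpha_1X_1,\alpha_2X_2)$; inequalities between vectors are componentwise. $\mathbf X$ is $I(\alpha)$ if for every $\mathbf x\in\mathbb R^2$, $\mathbb P[\alpha\mathbf X>\mathbf x\mid \alpha\mathbf X>\mathbf x']\le \mathbb P[\alpha\mathbf X>\mathbf x\mid \alpha\mathbf X>\mathbf x'']$ whenever $\mathbf x'\le\mathbf x''$ and $\mathbb P[\alpha\mathbf X>\mathbf x'']>0$. A copula is $I(\alpha)$ if a random vector with that distribution function is. $C_\delta$ is a 2-copula for each $\delta\in[-1,1]$. *)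

(* Defs.v *)
From HB Require Import structures.
From mathcomp Require Import all_boot all_order all_algebra.
From mathcomp Require Import all_classical all_reals all_analysis.
Set Implicit Arguments. Unset Strict Implicit. Unset Printing Implicit Defensive.
Import Order.TTheory GRing.Theory Num.Theory.
Local Open Scope classical_set_scope.
Local Open Scope ring_scope.

Definition AMH (R : realType) (delta u v : R) : R :=
  u * v / (1 + delta * (1 - u) * (1 - v)).

Definition clamp01 (R : realType) (x : R) : R := Num.min 1 (Num.max 0 x).

(* (X1,X2) has the distribution function H(x,y) = C(clamp x, clamp y),
   i.e. the joint df induced by the copula C (uniform margins on [0,1]). *)
Definition has_copula_df (R : realType) (d : measure_display)
  (T : measurableType d) (P : probability T R) (X1 X2 : T -> R)
  (C : R -> R -> R) : Prop :=
  forall x y : R,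
    P [set w | X1 w <= x /\ X2 w <= y] = (C (clamp01 x) (clamp01 y))%:E.

Definition upper_event (R : realType) (T : Type) (a1 a2 : R) (X1 X2 : T -> R)
  (x1 x2 : R) : set T :=
  [set w | x1 < a1 * X1 w /\ x2 < a2 * X2 w].

Definition condprob (R : realType) (d : measure_display)
  (T : measurableType d) (P : probability T R) (A B : set T) : R :=
  fine (P (A `&` B)) / fine (P B).

Definition vec_I (R : realType) (d : measure_display)
  (T : measurableType d) (P : probability T R) (a1 a2 : R)
  (X1 X2 : T -> R) : Prop :=
  forall x1 x2 x1' x2' x1'' x2'' : R,
    x1' <= x1'' -> x2' <= x2'' ->
    (0 < P (upper_event a1 a2 X1 X2 x1'' x2''))%E ->
    condprob P (upper_event a1 a2 X1 X2 x1 x2) (upper_event a1 a2 X1 X2 x1' x2')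
    <= condprob P (upper_event a1 a2 X1 X2 x1 x2) (upper_event a1 a2 X1 X2 x1'' x2'').

(* the copula C is I(alpha): a random vector with distribution function C is
   I(alpha) (the property depends only on the distribution, so we quantify
   over all such random vectors). *)
Definition copula_I (R : realType) (a1 a2 : R) (C : R -> R -> R) : Prop :=
  forall (d : measure_display) (T : measurableType d) (P : probability T R)
    (X1 X2 : T -> R),
    measurable_fun setT X1 -> measurable_fun setT X2 ->
    has_copula_df P X1 X2 C ->
    vec_I P a1 a2 X1 X2.

(* Main.v *)
Require Import Defs.
From HB Require Import structures.
From mathcomp Require Import all_boot all_order all_algebra.
From mathcomp Require Import all_classical all_reals all_analysis.
From mathcomp Require Import ring lra.
Import Order.TTheory GRing.Theory Num.Theory.
Set Implicit Arguments. Unset Strict Implicit.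
Local Open Scope classical_set_scope.
Local Open Scope ring_scope.


Definition Dm (R : realType) (delta u v : R) : R := 1 + delta * (1 - u) * (1 - v).

Lemma AMH_D (R : realType) (dl u v : R) : Dm dl u v != 0 ->
  AMH dl u v * Dm dl u v = u * v.
Proof. by move=> h; rewrite /AMH -/(Dm dl u v) divfK. Qed.

Lemma AMH0l (R : realType) (dl v : R) : AMH dl 0 v = 0.
Proof. by rewrite /AMH !mul0r. Qed.
Lemma AMH0r (R : realType) (dl u : R) : AMH dl u 0 = 0.
Proof. by rewrite /AMH mulr0 mul0r. Qed.

Lemma Dm_pos (R : realType) (dl u v : R) : -1 <= dl -> 0 <= u <= 1 -> 0 <= v <= 1 ->
  0 < u -> 0 < Dm dl u v.
Proof.
move=> h1 /andP[u0 u1] /andP[v0 v1] up; rewrite /Dm.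
have : 0 <= (1 - u) * (1 - v) by apply: mulr_ge0; lra.
have : (1 - u) * (1 - v) < 1 by nra.
nra.
Qed.

Lemma Dm_pos' (R : realType) (dl u v : R) : -1 <= dl -> 0 <= u <= 1 -> 0 <= v <= 1 ->
  0 < v -> 0 < Dm dl u v.
Proof.
move=> h1 hu hv vp; have -> : Dm dl u v = Dm dl v u by rewrite /Dm; ring.
exact: Dm_pos.
Qed.

Lemma Dm_pos0 (R : realType) (dl u v : R) : 0 <= dl -> 0 <= u <= 1 -> 0 <= v <= 1 ->
  0 < Dm dl u v.
Proof.
move=> h1 /andP[u0 u1] /andP[v0 v1]; rewrite /Dm.
have : 0 <= (1 - u) * (1 - v) by apply: mulr_ge0; lra.
nra.
Qed.

Lemma tp2_gen (R : realType) (f1 f2 f3 f4 D1 D2 D3 D4 : R) :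
  0 < D1 -> 0 < D2 -> 0 < D3 -> 0 < D4 ->
  0 <= (f1 * D1) * (f4 * D4) * D2 * D3 - (f2 * D2) * (f3 * D3) * D1 * D4 ->
  f2 * f3 <= f1 * f4.
Proof.
move=> p1 p2 p3 p4 h.
have hp : 0 < D1 * D2 * D3 * D4 by rewrite !mulr_gt0.
have e : (f1 * D1) * (f4 * D4) * D2 * D3 - (f2 * D2) * (f3 * D3) * D1 * D4
   = (f1 * f4 - f2 * f3) * (D1 * D2 * D3 * D4) by ring.
rewrite e in h; rewrite -subr_ge0.
by rewrite -(pmulr_lge0 _ hp).
Qed.

Lemma pos_ne (R : realType) (x : R) : x != 0 -> 0 <= x -> 0 < x.
Proof. by move=> h1 h2; rewrite lt_def h1. Qed.

Lemma ge0_eq (R : realType) (y x : R) : y = x -> 0 <= x -> 0 <= y.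
Proof. by move=> ->. Qed.

Lemma D_ne0 (R : realType) (dl u v : R) : 0 < Dm dl u v -> Dm dl u v != 0.
Proof. by move=> h; rewrite gt_eqF. Qed.

(* (-1,-1) : C TP2, delta <= 0 *)
Lemma tp2_C (R : realType) (dl u v u' v' : R) : -1 <= dl <= 0 ->
  0 <= u <= 1 -> 0 <= v <= 1 -> 0 <= u' <= 1 -> 0 <= v' <= 1 ->
  u' <= u -> v' <= v ->
  AMH dl u v' * AMH dl u' v <= AMH dl u v * AMH dl u' v'.
Proof.
move=> /andP[d1 d2] hu hv hu' hv' uu vv.
have [u'0|u'p] := eqVneq u' 0; first by rewrite u'0 !AMH0l !mulr0.
have [v'0|v'p] := eqVneq v' 0; first by rewrite v'0 !AMH0r mul0r mulr0.
have u'g : 0 < u' by apply: pos_ne => //; case/andP: hu'.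
have v'g : 0 < v' by apply: pos_ne => //; case/andP: hv'.
have ug : 0 < u by lra.
have vg : 0 < v by lra.
have P1 := Dm_pos d1 hu hv ug.
have P2 := Dm_pos d1 hu hv' ug.
have P3 := Dm_pos d1 hu' hv u'g.
have P4 := Dm_pos d1 hu' hv' u'g.
apply: (tp2_gen P1 P2 P3 P4).
rewrite !AMH_D ?D_ne0 //.
have -> : u * v * (u' * v') * Dm dl u v' * Dm dl u' v -
  u * v' * (u' * v) * Dm dl u v * Dm dl u' v' =
  (u * v * u' * v') * (- dl) * ((u - u') * (v - v')) by rewrite /Dm; ring.
apply: mulr_ge0; first apply: mulr_ge0; first by rewrite !mulr_ge0 //; lra.
  lra.
apply: mulr_ge0; lra.
Qed.

(* (-1,1): g u v = u - C u v, delta >= 0, u' <= u, v <= v' *)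
Lemma tp2_g (R : realType) (dl u v u' v' : R) : 0 <= dl <= 1 ->
  0 <= u <= 1 -> 0 <= v <= 1 -> 0 <= u' <= 1 -> 0 <= v' <= 1 ->
  u' <= u -> v <= v' ->
  (u - AMH dl u v') * (u' - AMH dl u' v) <= (u - AMH dl u v) * (u' - AMH dl u' v').
Proof.
move=> /andP[d1 d2] hu hv hu' hv' uu vv.
have P1 := Dm_pos0 d1 hu hv.
have P2 := Dm_pos0 d1 hu hv'.
have P3 := Dm_pos0 d1 hu' hv.
have P4 := Dm_pos0 d1 hu' hv'.
apply: (tp2_gen P1 P2 P3 P4).
rewrite !mulrBl !AMH_D ?D_ne0 //.
apply: (@ge0_eq _ _ (
  (u * (1 - v) * (1 + dl * (1 - u))) * (u' * (1 - v') * (1 + dl * (1 - u'))) * dl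
   * ((u - u') * (v' - v)))); first by rewrite /Dm; ring.
case/andP: hu => ? ?; case/andP: hv => ? ?; case/andP: hu' => ? ?; case/andP: hv' => ? ?.
apply: mulr_ge0; last by apply: mulr_ge0; lra.
apply: mulr_ge0 => //; apply: mulr_ge0; apply: mulr_ge0; try apply: mulr_ge0; try lra;
  (have : 0 <= dl * (1 - u) by apply: mulr_ge0; lra); (have : 0 <= dl * (1 - u') by apply: mulr_ge0; lra); lra.
Qed.

(* (1,1): S u v = 1 - u - v + C u v, delta <= 0, u <= u', v <= v' *)
Lemma tp2_S (R : realType) (dl u v u' v' : R) : -1 <= dl <= 0 ->
  0 <= u <= 1 -> 0 <= v <= 1 -> 0 <= u' <= 1 -> 0 <= v' <= 1 ->
  u <= u' -> v <= v' ->
  (1 - u - v' + AMH dl u v') * (1 - u' - v + AMH dl u' v)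
  <= (1 - u - v + AMH dl u v) * (1 - u' - v' + AMH dl u' v').
Proof.
move=> /andP[d1 d2] hu hv hu' hv' uu vv.
have [e|ne] := eqVneq u u'; first by rewrite -e mulrC.
have [e|ne'] := eqVneq v v'; first by rewrite -e mulrC.
case/andP: hu => u0 u1; case/andP: hv => v0 v1; case/andP: hu' => u0' u1'; case/andP: hv' => v0' v1'.
have u'g : 0 < u' by rewrite lt_def; apply/andP; split => //; apply/eqP => h;
  move: ne; rewrite h; apply/negP; rewrite negbK; apply/eqP; lra.
have v'g : 0 < v' by rewrite lt_def; apply/andP; split => //; apply/eqP => h;
  move: ne'; rewrite h; apply/negP; rewrite negbK; apply/eqP; lra.
have hu : 0 <= u <= 1 by lra.
have hv : 0 <= v <= 1 by lra.
have hu' : 0 <= u' <= 1 by lra.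
have hv' : 0 <= v' <= 1 by lra.
have P2 := Dm_pos' d1 hu hv' v'g.
have P3 := Dm_pos d1 hu' hv u'g.
have P4 := Dm_pos d1 hu' hv' u'g.
have [P1|P1] := ltP 0 (Dm dl u v); last first.
  have hpq : 0 <= (1 - u) * (1 - v) by apply: mulr_ge0; lra.
  have hpq1 : (1 - u) * (1 - v) <= 1 - u by rewrite ler_piMr; lra.
  have hu0 : u = 0 by move: P1; rewrite /Dm; nra.
  have hv0 : v = 0.
    have hpq2 : (1 - u) * (1 - v) <= 1 - v by rewrite ler_piMl; lra.
    by move: P1; rewrite /Dm; nra.
  rewrite hu0 hv0 AMH0l AMH0r AMH0l !subr0 !addr0 mul1r.
  have hc := AMH_D (D_ne0 P4).
  have hc0 : 0 <= AMH dl u' v' by rewrite /AMH divr_ge0 // ?mulr_ge0 //; exact: ltW.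
  have hD4 : Dm dl u' v' <= 1.
    rewrite /Dm; have : 0 <= (1 - u') * (1 - v') by apply: mulr_ge0; lra.
    nra.
  have : u' * v' <= AMH dl u' v' by rewrite -hc ler_piMr.
  nra.
apply: (tp2_gen P1 P2 P3 P4).
rewrite !mulrDl !AMH_D ?D_ne0 //.
apply: (@ge0_eq _ _ (((1 - u) * (1 - v) * (1 - u') * (1 - v')) * (- dl) * ((u' - u) * (v' - v))
   * ((1 + dl * (1 - u - v)) * (1 + dl * (1 - u' - v')) + dl * Dm dl u v * Dm dl u' v'))).
  by rewrite /Dm; ring.
apply: mulr_ge0; first apply: mulr_ge0; first by rewrite !mulr_ge0 //; lra.
- apply: mulr_ge0; lra.
- have N1 : Dm dl u v <= 1 + dl * (1 - u - v).
    rewrite /Dm; have : 0 <= u * v by apply: mulr_ge0.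
    nra.
  have N4 : Dm dl u' v' <= 1 + dl * (1 - u' - v').
    rewrite /Dm; have : 0 <= u' * v' by apply: mulr_ge0.
    nra.
  have : Dm dl u v * Dm dl u' v' <= (1 + dl * (1 - u - v)) * (1 + dl * (1 - u' - v')).
    by apply: ler_pM => //; exact: ltW.
  have : 0 <= Dm dl u v * Dm dl u' v' by apply: mulr_ge0; exact: ltW.
  nra.
Qed.

Lemma frac_le (R : realType) (a b c d : R) : 0 < b -> 0 < d -> a * d <= c * b -> a / b <= c / d.
Proof. by move=> hb hd h; rewrite ler_pdivrMr // mulrAC ler_pdivlMr. Qed.

Lemma step1 (R : realType) (h : R -> R -> R) :
  (forall a b, 0 <= h a b) ->
  (forall a a' b, a <= a' -> h a' b <= h a b) ->
  (forall a a' b b', a <= a' -> b <= b' -> h a b' * h a' b <= h a b * h a' b') ->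
  forall x1 s s' b m, s <= s' -> b <= m ->
  h (Num.max x1 s) m * h s' b <= h (Num.max x1 s') m * h s b.
Proof.
move=> hnn anti tp2 x1 s s' b m ss bm.
have [xs|sx] := leP x1 s.
  have xs' : x1 <= s' by exact: le_trans xs ss.
  rewrite [Num.max x1 s']max_r // [X in _ <= X]mulrC; exact: tp2.
have [xs'|s'x] := leP x1 s'.
    apply: le_trans (tp2 _ _ _ _ xs' bm) _.
  rewrite [X in _ <= X]mulrC; apply: ler_wpM2r => //.
  exact: anti (ltW sx).
by apply: ler_wpM2l => //; apply: anti.
Qed.

Lemma ratio_main (R : realType) (h : R -> R -> R) :
  (forall a b, 0 <= h a b) ->
  (forall a a' b, a <= a' -> h a' b <= h a b) ->
  (forall a b b', b <= b' -> h a b' <= h a b) ->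
  (forall a a' b b', a <= a' -> b <= b' -> h a b' * h a' b <= h a b * h a' b') ->
  forall x1 x2 x1' x2' x1'' x2'', x1' <= x1'' -> x2' <= x2'' -> 0 < h x1'' x2'' ->
  h (Num.max x1 x1') (Num.max x2 x2') / h x1' x2'
  <= h (Num.max x1 x1'') (Num.max x2 x2'') / h x1'' x2''.
Proof.
move=> hnn anti1 anti2 tp2 x1 x2 x1' x2' x1'' x2'' l1 l2 pos.
have pm : 0 < h x1'' x2' by apply: lt_le_trans pos (anti2 _ _ _ l2).
have p' : 0 < h x1' x2' by apply: lt_le_trans pm (anti1 _ _ _ l1).
apply: (@le_trans _ _ (h (Num.max x1 x1'') (Num.max x2 x2') / h x1'' x2')).
  apply: frac_le => //; apply: step1 => //; by rewrite le_max lexx orbT.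
apply: frac_le => //.
pose hT := fun a b => h b a.
have := @step1 R hT (fun a b => hnn b a) (fun a a' b => anti2 b a a')
  (fun a a' b b' l l' => ltac:(rewrite /hT mulrC; exact: tp2)) x2 x2' x2'' x1'' (Num.max x1 x1'') l2.
have hm : x1'' <= Num.max x1 x1'' by rewrite le_max lexx orbT.
by move/(_ hm); rewrite /hT.
Qed.

Lemma clampE (R : realType) (x : R) :
  clamp01 x = if x < 0 then 0 else if x < 1 then x else 1.
Proof.
rewrite /clamp01; case: (ltP x 0) => h0; first by rewrite min_r // ler01.
by case: (ltP x 1).
Qed.

Lemma cl_ge0 (R : realType) (x : R) : 0 <= clamp01 x.
Proof. by rewrite clampE; case: ifP => h; [|case: ifP => h']; lra. Qed.
Lemma cl_le1 (R : realType) (x : R) : clamp01 x <= 1.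
Proof. by rewrite clampE; case: ifP => h; [|case: ifP => h']; lra. Qed.
Lemma cl_01 (R : realType) (x : R) : 0 <= clamp01 x <= 1.
Proof. by rewrite cl_ge0 cl_le1. Qed.
Lemma cl_mono (R : realType) (x y : R) : x <= y -> clamp01 x <= clamp01 y.
Proof.
move=> h; rewrite !clampE.
by case: ifP => h1; case: ifP => h2; try case: ifP => h3; try case: ifP => h4; lra.
Qed.
Lemma cl_lip (R : realType) (x y : R) : x <= y -> clamp01 y - clamp01 x <= y - x.
Proof.
move=> h; rewrite !clampE.
by case: ifP => h1; case: ifP => h2; try case: ifP => h3; try case: ifP => h4; lra.
Qed.
Lemma cl1 (R : realType) : clamp01 (1 : R) = 1.
Proof. by rewrite clampE ltr10 ltxx. Qed.

Definition pr (R : realType) (d : measure_display) (T : measurableType d)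
  (P : probability T R) (A : set T) : R := fine (P A).

Lemma Pfin (R : realType) (d : measure_display) (T : measurableType d)
  (P : probability T R) (A : set T) : measurable A -> P A = (pr P A)%:E.
Proof. by move=> mA; rewrite /pr fineK // fin_num_measure. Qed.

Lemma pr_ge0 (R : realType) (d : measure_display) (T : measurableType d)
  (P : probability T R) (A : set T) : 0 <= pr P A.
Proof. by rewrite /pr fine_ge0. Qed.

Lemma pr_le (R : realType) (d : measure_display) (T : measurableType d)
  (P : probability T R) (A B : set T) : measurable A -> measurable B ->
  A `<=` B -> pr P A <= pr P B.
Proof.
move=> mA mB AB; apply: fine_le; rewrite ?fin_num_measure //.
by apply: le_measure; rewrite ?inE.
Qed.

Lemma pr_T (R : realType) (d : measure_display) (T : measurableType d)
  (P : probability T R) : pr P setT = 1.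
Proof. by rewrite /pr probability_setT. Qed.

Lemma pr_D (R : realType) (d : measure_display) (T : measurableType d)
  (P : probability T R) (A B : set T) : measurable A -> measurable B ->
  pr P A = pr P (A `\` B) + pr P (A `&` B).
Proof.
move=> mA mB; have E : (P A = P (A `\` B) + P (A `&` B))%E := measureDI P mA mB.
move: E; rewrite (Pfin P mA) (Pfin P (measurableD mA mB)) (Pfin P (measurableI _ _ mA mB)).
by rewrite -EFinD => -[].
Qed.

Lemma pr_null (R : realType) (d : measure_display) (T : measurableType d)
  (P : probability T R) (A B N : set T) : measurable A -> measurable B -> measurable N ->
  A `<=` B -> B `\` A `<=` N -> pr P N = 0 -> pr P A = pr P B.
Proof.
move=> mA mB mN AB BAN N0.
rewrite (pr_D P mB mA) (_ : B `&` A = A); last by rewrite setIidr.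
have : pr P (B `\` A) <= 0 by rewrite -N0; apply: pr_le => //; exact: measurableD.
have := pr_ge0 P (B `\` A); lra.
Qed.

Lemma le0_eps (R : realType) (x : R) : (forall e, 0 < e -> x <= e) -> x <= 0.
Proof.
move=> h; rewrite leNgt; apply/negP => x0.
have := h (x / 2); rewrite divr_gt0 // => /(_ isT); lra.
Qed.

Lemma m_le (R : realType) (d : measure_display) (T : measurableType d) (f : T -> R)
  (mf : measurable_fun setT f) c : measurable [set w | f w <= c].
Proof. by rewrite -preimage_itvNyc -[_ @^-1` _]setTI; apply: mf => //; exact: measurable_itv. Qed.
Lemma m_lt (R : realType) (d : measure_display) (T : measurableType d) (f : T -> R)
  (mf : measurable_fun setT f) c : measurable [set w | f w < c].
Proof. by rewrite -preimage_itvNyo -[_ @^-1` _]setTI; apply: mf => //; exact: measurable_itv. Qed.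
Lemma m_gt (R : realType) (d : measure_display) (T : measurableType d) (f : T -> R)
  (mf : measurable_fun setT f) c : measurable [set w | c < f w].
Proof. by rewrite -preimage_itvoy -[_ @^-1` _]setTI; apply: mf => //; exact: measurable_itv. Qed.
Lemma m_eq (R : realType) (d : measure_display) (T : measurableType d) (f : T -> R)
  (mf : measurable_fun setT f) c : measurable [set w | f w = c].
Proof.
have -> : [set w | f w = c] = [set w | f w <= c] `\` [set w | f w < c].
  apply/seteqP; split => w /=.
    by move=> ->; rewrite lexx ltxx.
  by move=> [h1 h2]; apply/eqP; rewrite eq_le h1 /= leNgt; apply/negP.
by apply: measurableD; [exact: m_le | exact: m_lt].
Qed.

Lemma notle (R : realType) (x y : R) : (~ (x <= y)) = (y < x).
Proof. by rewrite ltNge; apply/propext; split => /negP. Qed.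

Lemma AMH_u1 (R : realType) (dl u : R) : AMH dl u 1 = u.
Proof. by rewrite /AMH subrr mulr0 addr0 divr1 mulr1. Qed.
Lemma AMH_1v (R : realType) (dl v : R) : AMH dl 1 v = v.
Proof. by rewrite /AMH subrr mulr0 mul0r addr0 divr1 mul1r. Qed.

Section cop.
Context (R : realType) (dl : R) (d : measure_display) (T : measurableType d)
  (P : probability T R) (X1 X2 : T -> R) (mX1 : measurable_fun setT X1)
  (mX2 : measurable_fun setT X2) (hdf : has_copula_df P X1 X2 (AMH dl)).

Let cl := @clamp01 R.

Lemma prF x y : pr P [set w | X1 w <= x /\ X2 w <= y] = AMH dl (cl x) (cl y).
Proof. by rewrite /pr hdf. Qed.

Lemma mF x y : measurable [set w | X1 w <= x /\ X2 w <= y].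
Proof. exact: (measurableI _ _ (m_le mX1 x) (m_le mX2 y)). Qed.

Lemma pr_conull (A B : set T) : measurable A -> measurable B -> pr P B = 1 ->
  pr P A = pr P (A `&` B).
Proof.
move=> mA mB B1; rewrite (pr_D P mA mB).
have h1 : pr P (A `\` B) <= pr P (setT `\` B).
  apply: pr_le => //; [exact: measurableD | exact: measurableD | by move=> w [_ ?]].
have h2 := pr_D P measurableT mB; rewrite pr_T setTI B1 in h2.
have := pr_ge0 P (A `\` B); lra.
Qed.

Lemma pr2_1 : pr P [set w | X2 w <= 1] = 1.
Proof.
apply/le_anti/andP; split.
  by rewrite -(pr_T P); apply: pr_le => //; exact: m_le.
have e : pr P [set w | X1 w <= 1 /\ X2 w <= 1] = 1 by rewrite prF /cl cl1 AMH_u1.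
apply: le_trans (_ : pr P [set w | X1 w <= 1 /\ X2 w <= 1] <= _); first by rewrite e.
by apply: pr_le; [exact: mF | exact: m_le | move=> w []].
Qed.

Lemma pr1_1 : pr P [set w | X1 w <= 1] = 1.
Proof.
apply/le_anti/andP; split.
  by rewrite -(pr_T P); apply: pr_le => //; exact: m_le.
have e : pr P [set w | X1 w <= 1 /\ X2 w <= 1] = 1 by rewrite prF /cl cl1 AMH_u1.
apply: le_trans (_ : pr P [set w | X1 w <= 1 /\ X2 w <= 1] <= _); first by rewrite e.
by apply: pr_le; [exact: mF | exact: m_le | move=> w []].
Qed.

Lemma marg1 a : pr P [set w | X1 w <= a] = cl a.
Proof.
rewrite (pr_conull (m_le mX1 a) (m_le mX2 1) pr2_1).
by have := prF a 1; rewrite /cl cl1 AMH_u1.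
Qed.

Lemma marg2 b : pr P [set w | X2 w <= b] = cl b.
Proof.
rewrite (pr_conull (m_le mX2 b) (m_le mX1 1) pr1_1) setIC.
by have := prF 1 b; rewrite /cl cl1 AMH_1v.
Qed.

Lemma atom1 a : pr P [set w | X1 w = a] = 0.
Proof.
apply/le_anti/andP; split; last exact: pr_ge0.
apply: le0_eps => e e0.
have h := pr_D P (m_le mX1 a) (m_le mX1 (a - e)).
rewrite setIidr in h; last by move=> w /= h'; lra.
rewrite !marg1 in h.
have hl := @cl_lip R (a - e) a ltac:(lra).
apply: le_trans (_ : pr P ([set w | X1 w <= a] `\` [set w | X1 w <= a - e]) <= e).
  apply: pr_le; [exact: m_eq | apply: measurableD; exact: m_le |].
  by move=> w /= ->; split => //; rewrite notle; lra.
rewrite /cl in h; lra.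
Qed.

Lemma atom2 a : pr P [set w | X2 w = a] = 0.
Proof.
apply/le_anti/andP; split; last exact: pr_ge0.
apply: le0_eps => e e0.
have h := pr_D P (m_le mX2 a) (m_le mX2 (a - e)).
rewrite setIidr in h; last by move=> w /= h'; lra.
rewrite !marg2 in h.
have hl := @cl_lip R (a - e) a ltac:(lra).
apply: le_trans (_ : pr P ([set w | X2 w <= a] `\` [set w | X2 w <= a - e]) <= e).
  apply: pr_le; [exact: m_eq | apply: measurableD; exact: m_le |].
  by move=> w /= ->; split => //; rewrite notle; lra.
rewrite /cl in h; lra.
Qed.


Lemma ev_pp x1 x2 : pr P (upper_event 1 1 X1 X2 x1 x2) =
  1 - cl x1 - cl x2 + AMH dl (cl x1) (cl x2).
Proof.
set A := [set w | X1 w <= x1]; set B := [set w | X2 w <= x2].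
have mA : measurable A by exact: m_le.
have mB : measurable B by exact: m_le.
have mTA : measurable (setT `\` A) by exact: measurableD.
have eE : upper_event 1 1 X1 X2 x1 x2 = (setT `\` A) `\` B.
  by rewrite /upper_event; apply/seteqP; split => w /=; rewrite !mul1r !notle; [move=> [? ?] | move=> [[_ ?] ?]].
have e2 : (setT `\` A) `&` B = B `\` A.
  by apply/seteqP; split => w /=; [move=> [[_ ?] ?] | move=> [? ?]].
have h1 := pr_D P measurableT mA; rewrite setTI pr_T /A marg1 -/A in h1.
have h2 := pr_D P mTA mB; rewrite e2 in h2.
have h3 := pr_D P mB mA; rewrite setIC /B /A prF -/A -/B marg2 in h3.
rewrite eE; clear -h1 h2 h3; lra.
Qed.

Lemma ev_mm x1 x2 : pr P (upper_event (-1) (-1) X1 X2 x1 x2) =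
  AMH dl (cl (- x1)) (cl (- x2)).
Proof.
rewrite -prF.
have e : upper_event (-1) (-1) X1 X2 x1 x2 = [set w | X1 w < - x1 /\ X2 w < - x2].
  by rewrite /upper_event; apply/seteqP; split => w /=; rewrite !mulN1r [x1 < _]ltrNr [x2 < _]ltrNr.
have mE : measurable [set w | X1 w < - x1 /\ X2 w < - x2].
  exact: (measurableI _ _ (m_lt mX1 _) (m_lt mX2 _)).
have mE' : measurable [set w | X1 w <= - x1 /\ X2 w < - x2].
  exact: (measurableI _ _ (m_le mX1 _) (m_lt mX2 _)).
rewrite e; transitivity (pr P [set w | X1 w <= - x1 /\ X2 w < - x2]).
  apply: (pr_null mE mE' (m_eq mX1 (- x1))).
  - by move=> w /= [h1 h2]; split => //; exact: ltW.
  - move=> w /= [[h1 h2] h]; apply/eqP; rewrite eq_le h1 /= leNgt.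
    by apply/negP => h'; exact: h (conj h' h2).
  - exact: atom1.
apply: (pr_null mE' (mF _ _) (m_eq mX2 (- x2))).
- by move=> w /= [h1 h2]; split => //; exact: ltW.
- move=> w /= [[h1 h2] h]; apply/eqP; rewrite eq_le h2 /= leNgt.
  by apply/negP => h'; exact: h (conj h1 h').
- exact: atom2.
Qed.


Lemma ev_mp x1 x2 : pr P (upper_event (-1) 1 X1 X2 x1 x2) =
  cl (- x1) - AMH dl (cl (- x1)) (cl x2).
Proof.
have e : upper_event (-1) 1 X1 X2 x1 x2 = [set w | X1 w < - x1 /\ x2 < X2 w].
  by rewrite /upper_event; apply/seteqP; split => w /=; rewrite mulN1r mul1r [x1 < _]ltrNr.
have mE : measurable [set w | X1 w < - x1 /\ x2 < X2 w].
  exact: (measurableI _ _ (m_lt mX1 _) (m_gt mX2 _)).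
set A := [set w | X1 w <= - x1]; set B := [set w | X2 w <= x2].
have mA : measurable A by exact: m_le.
have mB : measurable B by exact: m_le.
have e' : A `\` B = [set w | X1 w <= - x1 /\ x2 < X2 w].
  by apply/seteqP; split => w /=; rewrite notle.
have mE' : measurable (A `\` B) by exact: measurableD.
rewrite e; transitivity (pr P (A `\` B)).
  rewrite e'; rewrite e' in mE'.
  apply: (pr_null mE mE' (m_eq mX1 (- x1))).
  - by move=> w /= [h1 h2]; split => //; exact: ltW.
  - move=> w /= [[h1 h2] h]; apply/eqP; rewrite eq_le h1 /= leNgt.
    by apply/negP => h'; exact: h (conj h' h2).
  - exact: atom1.
have h := pr_D P mA mB; rewrite /A /B prF -/A -/B marg1 in h.
clear -h; lra.
Qed.

Lemma ev_pm x1 x2 : pr P (upper_event 1 (-1) X1 X2 x1 x2) =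
  cl (- x2) - AMH dl (cl x1) (cl (- x2)).
Proof.
have e : upper_event 1 (-1) X1 X2 x1 x2 = [set w | x1 < X1 w /\ X2 w < - x2].
  by rewrite /upper_event; apply/seteqP; split => w /=; rewrite mulN1r mul1r [x2 < _]ltrNr.
have mE : measurable [set w | x1 < X1 w /\ X2 w < - x2].
  exact: (measurableI _ _ (m_gt mX1 _) (m_lt mX2 _)).
set A := [set w | X2 w <= - x2]; set B := [set w | X1 w <= x1].
have mA : measurable A by exact: m_le.
have mB : measurable B by exact: m_le.
have e' : A `\` B = [set w | x1 < X1 w /\ X2 w <= - x2].
  by apply/seteqP; split => w /=; rewrite notle => -[]. 
have mE' : measurable (A `\` B) by exact: measurableD.
rewrite e; transitivity (pr P (A `\` B)).
  rewrite e'; rewrite e' in mE'.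
  apply: (pr_null mE mE' (m_eq mX2 (- x2))).
  - by move=> w /= [h1 h2]; split => //; exact: ltW.
  - move=> w /= [[h1 h2] h]; apply/eqP; rewrite eq_le h2 /= leNgt.
    by apply/negP => h'; exact: h (conj h1 h').
  - exact: atom2.
have h := pr_D P mA mB; rewrite setIC /A /B prF -/A -/B marg2 in h.
clear -h; lra.
Qed.

End cop.

Lemma AMH_sym (R : realType) (dl u v : R) : AMH dl u v = AMH dl v u.
Proof.
rewrite /AMH [u * v]mulrC.
by have -> : 1 + dl * (1 - u) * (1 - v) = 1 + dl * (1 - v) * (1 - u) by ring.
Qed.

Lemma ue_I (R : realType) (T : Type) (a1 a2 : R) (X1 X2 : T -> R) x1 x2 y1 y2 :
  upper_event a1 a2 X1 X2 x1 x2 `&` upper_event a1 a2 X1 X2 y1 y2 =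
  upper_event a1 a2 X1 X2 (Num.max x1 y1) (Num.max x2 y2).
Proof.
rewrite /upper_event; apply/seteqP; split => w /=; rewrite !gt_max.
  by move=> [[h1 h2] [h3 h4]]; rewrite h1 h2 h3 h4.
by move=> [/andP[h1 h3] /andP[h2 h4]].
Qed.

Lemma ue_m (R : realType) (d : measure_display) (T : measurableType d)
  (X1 X2 : T -> R) (mX1 : measurable_fun setT X1) (mX2 : measurable_fun setT X2)
  a1 a2 x1 x2 : measurable (upper_event a1 a2 X1 X2 x1 x2).
Proof.
exact: (measurableI _ _ (m_gt (measurable_realfun.measurable_funM (measurable_cst a1) mX1) x1)
                        (m_gt (measurable_realfun.measurable_funM (measurable_cst a2) mX2) x2)).
Qed.

Lemma copula_I_gen (R : realType) (a1 a2 : R) (dl : R) :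
  (forall (d : measure_display) (T : measurableType d) (P : probability T R)
    (X1 X2 : T -> R), measurable_fun setT X1 -> measurable_fun setT X2 ->
    has_copula_df P X1 X2 (AMH dl) ->
    forall a a' b b', a <= a' -> b <= b' ->
      pr P (upper_event a1 a2 X1 X2 a b') * pr P (upper_event a1 a2 X1 X2 a' b)
      <= pr P (upper_event a1 a2 X1 X2 a b) * pr P (upper_event a1 a2 X1 X2 a' b')) ->
  copula_I a1 a2 (AMH dl).
Proof.
move=> tp2 d T P X1 X2 mX1 mX2 hdf x1 x2 x1' x2' x1'' x2'' l1 l2 pos.
rewrite /condprob !ue_I.
have hpos : 0 < pr P (upper_event a1 a2 X1 X2 x1'' x2'').
  by rewrite /pr; apply: fine_gt0; rewrite pos /= ltey_eq fin_num_measure //; exact: ue_m.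
apply: (@ratio_main R (fun a b => pr P (upper_event a1 a2 X1 X2 a b))) => //.
- by move=> a b; exact: pr_ge0.
- move=> a a' b l; apply: pr_le; try exact: ue_m.
  by move=> w [h1 h2]; split => //; exact: le_lt_trans h1.
- move=> a b b' l; apply: pr_le; try exact: ue_m.
  by move=> w [h1 h2]; split => //; exact: le_lt_trans h2.
- exact: tp2.
Qed.

Lemma cI_pp (R : realType) (dl : R) : -1 <= dl <= 0 -> copula_I 1 1 (AMH dl).
Proof.
move=> hd; apply: copula_I_gen => d T P X1 X2 mX1 mX2 hdf a a' b b' la lb.
rewrite !(ev_pp mX1 mX2 hdf).
by apply: tp2_S => //; try exact: cl_01; exact: cl_mono.
Qed.

Lemma cI_mm (R : realType) (dl : R) : -1 <= dl <= 0 -> copula_I (-1) (-1) (AMH dl).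
Proof.
move=> hd; apply: copula_I_gen => d T P X1 X2 mX1 mX2 hdf a a' b b' la lb.
rewrite !(ev_mm mX1 mX2 hdf).
by apply: tp2_C => //; try exact: cl_01; apply: cl_mono; rewrite lerN2.
Qed.

Lemma cI_mp (R : realType) (dl : R) : 0 <= dl <= 1 -> copula_I (-1) 1 (AMH dl).
Proof.
move=> hd; apply: copula_I_gen => d T P X1 X2 mX1 mX2 hdf a a' b b' la lb.
rewrite !(ev_mp mX1 mX2 hdf).
by apply: tp2_g => //; try exact: cl_01; apply: cl_mono; rewrite ?lerN2.
Qed.

Lemma cI_pm (R : realType) (dl : R) : 0 <= dl <= 1 -> copula_I 1 (-1) (AMH dl).
Proof.
move=> hd; apply: copula_I_gen => d T P X1 X2 mX1 mX2 hdf a a' b b' la lb.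
rewrite !(ev_pm mX1 mX2 hdf) ![AMH dl (clamp01 _) (clamp01 (- _))]AMH_sym mulrC.
by apply: tp2_g => //; try exact: cl_01; apply: cl_mono; rewrite ?lerN2.
Qed.

Theorem mainTheorem5 (R : realType) (delta : R) :
  (0 <= delta <= 1 ->
     copula_I (-1) 1 (AMH delta) /\ copula_I 1 (-1) (AMH delta)) /\
  (-1 <= delta <= 0 ->
     copula_I 1 1 (AMH delta) /\ copula_I (-1) (-1) (AMH delta)).
Proof.
split => hd; first by split; [exact: cI_mp | exact: cI_pm].
by split; [exact: cI_pp | exact: cI_mm].
Qed.
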